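(* Let $G$ be a generalized split graph (GSP graph). Then $p(G)\le 2$.
   Context: A graph $G$ is a GSP (generalized split) graph if either $G$ or its complement $\overline{G}$ has the following form: its vertex set is partitioned into $V_1,V_2$ where $V_1$ spans a complete graph and $V_2$ spans a disjoint union of complete graphs with no edges between them. A comparability graph is a graph admitting a transitive orientation. $p(G)$ is the minimum number $m$ such that $E(G)$ is the union of the edge sets of $m$ pairwise edge-disjoint comparability subgraphs of $G$. *)

(* Defs.v *)
From mathcomp Require Import all_boot.
Set Implicit Arguments. Unset Strict Implicit. Unset Printing Implicit Defensive.

Definition simple_graph (T : finType) (g : rel T) : Prop :=
  symmetric g /\ irreflexive g.

Definition compl_graph (T : finType) (g : rel T) : rel T :=
  fun x y => (x != y) && ~~ g x y.

Definition is_clique (T : finType) (g : rel T) (S : {set T}) : Prop :=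
  forall x y, x \in S -> y \in S -> x != y -> g x y.

(* V(g) = V1 ⊔ V2, V1 spans a complete graph, V2 spans a disjoint union of
   complete graphs with no edges between them (given by a partition P of V2). *)
Definition gsp_form (T : finType) (g : rel T) : Prop :=
  exists (V1 : {set T}) (P : {set {set T}}),
    is_clique g V1 /\
    partition P (~: V1) /\
    (forall B, B \in P -> is_clique g B) /\
    (forall B C x y, B \in P -> C \in P -> B != C -> x \in B -> y \in C -> ~~ g x y).

Definition GSP (T : finType) (g : rel T) : Prop :=
  gsp_form g \/ gsp_form (compl_graph g).

Definition subgraph (T : finType) (h g : rel T) : Prop :=
  simple_graph h /\ forall x y, h x y -> g x y.

Definition transitive_orientation (T : finType) (h o : rel T) : Prop :=
  (forall x y, h x y = o x y || o y x) /\
  (forall x y, o x y -> ~~ o y x) /\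
  transitive o.

Definition comparability (T : finType) (h : rel T) : Prop :=
  exists o : rel T, transitive_orientation h o.

Definition comparability_cover (T : finType) (g : rel T) (m : nat)
    (hs : nat -> rel T) : Prop :=
  (forall i, i < m -> subgraph (hs i) g /\ comparability (hs i)) /\
  (forall i j x y, i < m -> j < m -> i != j -> ~~ (hs i x y && hs j x y)) /\
  (forall x y, g x y -> exists2 i, i < m & hs i x y).

(* p(G) <= k  iff  some m <= k admits such a cover (p(G) is the minimum m). *)
Definition p_le (T : finType) (g : rel T) (k : nat) : Prop :=
  exists m, m <= k /\ exists hs, comparability_cover g m hs.

(* Main.v *)
Require Import Defs.
From mathcomp Require Import all_boot.

Section Aux.
Variables (T : finType) (g : rel T).

Lemma key (o1 o2 : rel T) :
  simple_graph g ->
  (forall x y, o1 x y -> g x y) -> (forall x y, o2 x y -> g x y) ->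
  (forall x y, o1 x y -> ~~ o1 y x) -> (forall x y, o2 x y -> ~~ o2 y x) ->
  transitive o1 -> transitive o2 ->
  (forall x y, ~~ ((o1 x y || o1 y x) && (o2 x y || o2 y x))) ->
  (forall x y, g x y -> (o1 x y || o1 y x) || (o2 x y || o2 y x)) ->
  p_le g 2.
Proof.
move=> [gs gi] g1 g2 a1 a2 t1 t2 dis cov.
pose h (o : rel T) : rel T := fun x y => o x y || o y x.
have hsub : forall o : rel T, (forall x y, o x y -> g x y) ->
  (forall x y, o x y -> ~~ o y x) -> transitive o ->
  subgraph (h o) g /\ comparability (h o).
  move=> o go ao to; split; [split; [split|]|].
  - by move=> x y; rewrite /h orbC.
  - move=> x; rewrite /h orbb; apply/negP=> oxx.
    by move: (ao _ _ oxx); rewrite oxx.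
  - by move=> x y /orP[/go //| /go]; rewrite gs.
  - by exists o; split.
exists 2; split=> //.
exists (fun i => if i == 0 then h o1 else h o2); split; [|split].
- by move=> [|[|i]] //= _; apply: hsub.
- move=> [|[|i]] [|[|j]] x y //= _ _ _; [exact: dis | rewrite andbC; exact: dis].
- move=> x y /cov /orP[H|H]; first by exists 0.
  by exists 1.
Qed.
End Aux.

Theorem theorem3 (T : finType) (g : rel T) :
  simple_graph g -> GSP g -> p_le g 2.
Proof.
move=> sg; have [gs gi] := sg.
case=> [[V1 [P [cV1 [/and3P[/eqP cP _ _] [cB noE]]]]]|
        [V1 [P [cV1 [/and3P[/eqP cP _ _] [cB noE]]]]]].
- pose o1 : rel T := fun x y => [&& g x y, (x \in V1) == (y \in V1) & enum_rank x < enum_rank y].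
  pose o2 : rel T := fun x y => [&& g x y, x \in V1 & y \notin V1].
  apply: (@key T g o1 o2) => //.
  + by move=> x y /and3P[].
  + by move=> x y /and3P[].
  + move=> x y /and3P[_ _ l]; apply/negP=> /and3P[_ _ l'].
    by move: (ltn_trans l l'); rewrite ltnn.
  + by move=> x y /and3P[_ xV yV]; apply/negP=> /and3P[_ _]; rewrite xV.
  + move=> y x z /and3P[gxy exy lxy] /and3P[gyz eyz lyz].
    have lxz := ltn_trans lxy lyz.
    have nxz : x != z by apply/negP=> /eqP e; move: lxz; rewrite e ltnn.
    rewrite /o1 lxz (eq_op_trans exy eyz) andbT /= andbT.
    have inP u : u \notin V1 -> (pblock P u \in P) && (u \in pblock P u).
      by move=> uV; rewrite mem_pblock pblock_mem // cP in_setC.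
    have sameB u v : u \notin V1 -> v \notin V1 -> g u v -> pblock P u = pblock P v.
      move=> uV vV guv; apply/eqP/negP => /negP ne.
      have /andP[Pu uu] := inP u uV; have /andP[Pv vv] := inP v vV.
      by move: (noE _ _ u v Pu Pv ne uu vv); rewrite guv.
    case xV: (x \in V1).
      have yV : y \in V1 by rewrite -(eqP exy) xV.
      have zV : z \in V1 by rewrite -(eqP eyz) -(eqP exy) xV.
      exact: cV1 x z xV zV nxz.
    have yV : y \notin V1 by rewrite -(eqP exy) xV.
    have zV : z \notin V1 by rewrite -(eqP eyz) -(eqP exy) xV.
    have xV' : x \notin V1 by rewrite xV.
    have e1 := sameB x y xV' yV gxy; have e2 := sameB y z yV zV gyz.
    have /andP[Px xx] := inP x xV'; have /andP[_ zz] := inP z zV.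
    apply: (cB _ Px) => //; by rewrite e1 e2.
  + by move=> y x z /and3P[_ _ /negP yV] /and3P[_ /yV].
  + move=> x y; rewrite /o1 /o2.
    by case: (x \in V1); case: (y \in V1); rewrite /= ?andbF ?andbT ?orbF ?andbF.
  + move=> x y gxy.
    have nxy : x != y by apply/eqP => exy; move: gxy; rewrite exy gi.
    case e: ((x \in V1) == (y \in V1)).
      apply/orP; left; rewrite /o1 gxy (gs y x) gxy e eq_sym e /=.
      rewrite -neq_ltn; apply/eqP => /val_inj/enum_rank_inj exy; by rewrite exy eqxx in nxy.
    apply/orP; right; rewrite /o2 gxy (gs y x) gxy /=.
    by move: e; case: (x \in V1); case: (y \in V1).
- pose r u := enum_rank (pblock P u).
  pose o1 : rel T := fun x y => [&& g x y, x \notin V1, y \notin V1 & r x < r y].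
  pose o2 : rel T := fun x y => [&& g x y, x \in V1 & y \notin V1].
  have inP u : u \notin V1 -> (pblock P u \in P) && (u \in pblock P u).
    by move=> uV; rewrite mem_pblock pblock_mem // cP in_setC.
  apply: (@key T g o1 o2) => //.
  + by move=> x y /and4P[].
  + by move=> x y /and3P[].
  + move=> x y /and4P[_ _ _ l]; apply/negP=> /and4P[_ _ _ l'].
    by move: (ltn_trans l l'); rewrite ltnn.
  + by move=> x y /and3P[_ xV yV]; apply/negP=> /and3P[_ _]; rewrite xV.
  + move=> y x z /and4P[gxy xV yV lxy] /and4P[gyz _ zV lyz].
    have lxz := ltn_trans lxy lyz.
    rewrite /o1 lxz xV zV !andbT.
    have ne : pblock P x != pblock P z.
      by apply/negP => /eqP e; move: lxz; rewrite /r e ltnn.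
    have nxz : x != z by apply/negP => /eqP e; move: ne; rewrite e eqxx.
    have /andP[Px xx] := inP x xV; have /andP[Pz zz] := inP z zV.
    have := noE _ _ x z Px Pz ne xx zz.
    by rewrite /compl_graph nxz /= negbK.
  + by move=> y x z /and3P[_ _ /negP yV] /and3P[_ /yV].
  + move=> x y; rewrite /o1 /o2.
    by case: (x \in V1); case: (y \in V1); rewrite /= ?andbF ?andbT ?orbF ?andbF.
  + move=> x y gxy.
    have nxy : x != y by apply/eqP => exy; move: gxy; rewrite exy gi.
    case xV: (x \in V1); case yV: (y \in V1).
    * have := cV1 x y xV yV nxy; by rewrite /compl_graph nxy gxy.
    * by rewrite /o2 gxy xV yV orbT.
    * by rewrite /o2 (gs y x) gxy xV yV !orbT.
    * apply/orP; left; rewrite /o1 (gs y x) gxy xV yV /=.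
      rewrite -neq_ltn; apply/eqP => /val_inj/enum_rank_inj e.
      have /andP[Px xx] := inP x (negbT xV); have /andP[_ yy] := inP y (negbT yV).
      have := cB _ Px x y xx; rewrite e => /(_ yy nxy).
      by rewrite /compl_graph nxy gxy.
Qed.
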